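(* Let $1\le d<n$ and $r\ge1$ be integers such that $$\left(1+d(n-d)+\binom{d}{2}\binom{n-d}{2}\right)r\le\binom{n}{d}.$$ Then the secant variety $\sigma_r(\mathcal{M}_{n,(1^d)})$ of the hypersimplex variety has the expected dimension $\min\{nr-1,\binom{n}{d}-1\}$, which here equals $nr-1$.
   Context: Work over $\mathbb{C}$. The variety $\mathcal{M}_{n,(1^d)}\subset\mathbb{P}^{\binom{n}{d}-1}$ is the toric variety of the hypersimplex $\Delta(n,d)=\mathrm{conv}\{e_{l_1}+\cdots+e_{l_d}:1\le l_1<\cdots<l_d\le n\}$. Concretely, it has coordinates $m_{i_1\cdots i_n}$ for $0/1$ vectors with exactly $d$ ones, and it is the Zariski closure of the image of $(\mu_{11},\ldots,\mu_{n1})\mapsto\bigl(\prod_{k:i_k=1}\mu_{k1}\bigr)$. It has dimension $n-1$. Its $r$-th secant variety $\sigma_r(\mathcal{M}_{n,(1^d)})$ is the Zariski closure of the image of $m_{i_1\cdots i_n}=\sum_{j=1}^r\prod_{k:i_k=1}\mu^{(j)}_{k1}$. Its expected dimension is $\min\{r(n-1)+r-1,\binom nd-1\}$. *)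

(* Defs.v *)
From mathcomp Require Import all_boot all_algebra.
From mathcomp Require Import Rstruct.
From mathcomp Require Import complex.
From mathcomp Require Import mpoly.

Set Implicit Arguments.
Unset Strict Implicit.
Unset Printing Implicit Defensive.
Import GRing.Theory.
Local Open Scope ring_scope.

Definition CC : closedFieldType := (Rdefinitions.R)[i].

Definition alg_indep (N k : nat) (g : k.-tuple {mpoly CC[N]}) : Prop :=
  forall P : {mpoly CC[k]}, P \mPo g = 0 -> P = 0.

(* Dimension (= transcendence degree over CC of the subalgebra generated by
   the F_i, i.e. the Krull dimension of the coordinate ring of the Zariski
   closure of the image of the polynomial map x |-> (F_i(x))_{i in I})
   of the affine variety parametrized by F : I -> {mpoly CC[N]}:
   the largest number of algebraically independent coordinate functions. *)
Definition image_closure_dim (N : nat) (I : finType) (F : I -> {mpoly CC[N]})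
    (e : nat) : Prop :=
  (exists g : e.-tuple {mpoly CC[N]},
      (forall i : 'I_e, exists c : I, tnth g i = F c) /\ alg_indep g) /\
  (forall (k : nat) (g : k.-tuple {mpoly CC[N]}),
      (forall i : 'I_k, exists c : I, tnth g i = F c) -> alg_indep g ->
      (k <= e)%N).

(* Parameters mu^{(j)}_{k1}, j < r, k < n, are the variables 'X_(mxvec_index j k) (index j*n+k)
   of {mpoly CC[r*n]}. *)
Definition mu (n r : nat) (j : 'I_r) (k : 'I_n) : {mpoly CC[r * n]} :=
  'X_(mxvec_index j k).

(* The index set of coordinates m_{i_1...i_n}: 0/1 vectors with exactly d
   ones, identified with their supports, the d-subsets of {0,...,n-1}. *)
Definition dsubset (n d : nat) := {S : {set 'I_n} | #|S| == d}.

(* Parametrization of the affine cone over sigma_r(M_{n,(1^d)}):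
   m_S = sum_{j<r} prod_{k in S} mu^{(j)}_{k1}. *)
Definition secant_param (n d r : nat) (S : dsubset n d) : {mpoly CC[r * n]} :=
  \sum_(j < r) \prod_(k in val S) mu j k.

(* dim sigma_r(M_{n,(1^d)}) = e  (projective dimension): the affine cone
   over it (closure of the image of secant_param) has dimension e + 1. *)
Definition secant_hypersimplex_dim (n d r e : nat) : Prop :=
  image_closure_dim (@secant_param n d r) e.+1.

(* Main.v *)
Require Import Defs.
From mathcomp Require Import all_boot all_algebra.
From mathcomp Require Import mpoly.
From mathcomp Require Import all_order.
From mathcomp Require Import zify.
Set Implicit Arguments.
Unset Strict Implicit.
Unset Printing Implicit Defensive.

(* Combinatorics: blocks, balls in the Johnson graph, greedy code. *)
Module Comb.

Section Block.
Variables (n d : nat) (X : {set 'I_n}) (a0 b0 : 'I_n).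
Hypotheses (a0X : a0 \in X) (b0X : b0 \notin X) (cX : #|X| = d).

Definition Rset (k : 'I_n) : {set 'I_n} :=
  if k \in X then (if k == a0 then X else b0 |: (X :\ k)) else k |: (X :\ a0).

Lemma Rset_card k : #|Rset k| = d.
Proof.
rewrite /Rset; case: ifP => kX; [case: ifP => ka|].
- by [].
- rewrite cardsU1 !inE (negbTE b0X) andbF /=.
  by move: (cardsD1 k X); rewrite kX cX => ->.
- rewrite cardsU1 !inE kX andbF /=.
  by move: (cardsD1 a0 X); rewrite a0X cX => ->.
Qed.

Lemma Rset_meet k : (d <= #|Rset k :&: X| + 1)%N.
Proof.
have key x : X :\ x \subset Rset k :&: X -> (d <= #|Rset k :&: X| + 1)%N.
  move=> /subset_leq_card h; move: (cardsD1 x X); rewrite cX => ->.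
  by rewrite addnC leq_add // leq_b1.
case: (boolP (k \in X)) => kX; [case: (boolP (k == a0)) => ka|].
- by apply: (key a0); rewrite /Rset kX ka; apply/subsetP => l; rewrite !inE => /andP[_ ->].
- by apply: (key k); rewrite /Rset kX (negbTE ka); apply/subsetP => l; rewrite !inE => /andP[-> ->]; rewrite orbT.
- by apply: (key a0); rewrite /Rset (negbTE kX); apply/subsetP => l; rewrite !inE => /andP[-> ->]; rewrite orbT.
Qed.

Lemma Rset_mem1 l k : l \notin X -> l != b0 -> (l \in Rset k) = (k == l).
Proof.
move=> lX lb; rewrite /Rset; case: ifP => kX; [case: ifP => ka|]; rewrite ?inE.
- by rewrite (negbTE lX); apply/esym/negbTE; apply: contraNneq lX => <-.
- rewrite (negbTE lb) (negbTE lX) andbF; apply/esym/negbTE; apply: contraNneq lX => <-; done.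
- by rewrite (negbTE lX) andbF orbF eq_sym.
Qed.

Lemma Rset_mem2 l k : l \in X -> l != a0 -> (l \in Rset k) = (k != l).
Proof.
move=> lX la; rewrite /Rset; case: ifP => kX; [case: ifP => ka|]; rewrite ?inE.
- by rewrite lX; move/eqP: ka => ->; rewrite eq_sym.
- have bl : l != b0 by apply: contraNneq b0X => <-.
  by rewrite (negbTE bl) lX andbT eq_sym.
- have kl : k != l by apply: contraFneq kX => ->.
  by rewrite la lX orbT kl.
Qed.

Lemma Rset_mem3 k : (a0 \in Rset k) = (k \in X).
Proof.
rewrite /Rset; case: ifP => kX; [case: ifP => ka|]; rewrite ?inE.
- by [].
- by rewrite a0X andbT [a0 == k]eq_sym ka orbT.
- rewrite eqxx /= orbF; apply: contraFF kX => /eqP <-; done.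
Qed.

Lemma sum_mem (A : {set 'I_n}) : (\sum_l (l \in A : nat))%N = #|A|.
Proof.
rewrite -sum1_card [RHS]big_mkcond /=; apply: eq_bigr => l _; by case: (l \in A).
Qed.

Lemma block_inj (al be : 'I_n -> nat) : (0 < d)%N ->
  (forall l, \sum_k al k * (l \in Rset k) = \sum_k be k * (l \in Rset k))%N ->
  al =1 be.
Proof.
move=> d0 H.
have tot (ga : 'I_n -> nat) : (\sum_l \sum_k ga k * (l \in Rset k) = d * \sum_k ga k)%N.
  rewrite exchange_big big_distrr /=; apply: eq_bigr => k _.
  by rewrite -big_distrr /= sum_mem Rset_card mulnC.
have Tab : (\sum_k al k = \sum_k be k)%N.
  apply/eqP; rewrite -(eqn_pmul2l d0) -!tot; apply/eqP/eq_bigr => l _; exact: H.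
have H1 l : l != b0 -> l != a0 -> al l = be l.
  move=> lb la; have := H l; case: (boolP (l \in X)) => lX.
    have ex (ga : 'I_n -> nat) : (\sum_k ga k * (l \in Rset k) + ga l = \sum_k ga k)%N.
      rewrite [RHS](bigD1 l) //= addnC; congr (_ + _).
      rewrite (bigD1 l) //= Rset_mem2 // eqxx muln0 add0n; apply: eq_bigr => k kl.
      by rewrite Rset_mem2 // kl muln1.
    move=> e; have := ex al; have := ex be; rewrite e Tab => h1 h2.
    by apply: (@addnI (\sum_k be k * (l \in Rset k))); rewrite h2 h1.
  have ex (ga : 'I_n -> nat) : (\sum_k ga k * (l \in Rset k) = ga l)%N.
    rewrite (bigD1 l) //= Rset_mem1 // eqxx muln1 big1 ?addn0 // => k kl.
    by rewrite Rset_mem1 // (negbTE kl) muln0.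
  by rewrite !ex.
have H2 : al a0 = be a0.
  have ex (ga : 'I_n -> nat) : (\sum_k ga k * (a0 \in Rset k) =
                                ga a0 + \sum_(k | (k \in X) && (k != a0)) ga k)%N.
    rewrite (bigD1 a0) //= Rset_mem3 a0X muln1; congr (_ + _).
    rewrite big_mkcond [RHS]big_mkcond /=; apply: eq_bigr => k _; rewrite Rset_mem3.
    by case: (k \in X); case: (k != a0); rewrite ?muln1 ?muln0.
  have e2 : (\sum_(k | (k \in X) && (k != a0)) al k = \sum_(k | (k \in X) && (k != a0)) be k)%N.
    apply: eq_bigr => k /andP[kX ka]; apply: H1 => //.
    by apply: contraTneq kX => ->.
  have := H a0; rewrite !ex e2; lia.
have H3 : al b0 = be b0.
  have := Tab; rewrite (bigD1 b0) //= [X in _ = X](bigD1 b0) //=.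
  have -> : (\sum_(k | k != b0) al k = \sum_(k | k != b0) be k)%N.
    apply: eq_bigr => k kb; case: (k =P a0) => [->|/eqP ka]; [exact: H2|exact: H1].
  by move/addIn.
move=> l; case: (l =P b0) => [->|/eqP lb] //; case: (l =P a0) => [->|/eqP la] //.
exact: H1.
Qed.

End Block.

Section Greedy.
Variables n d : nat.

Definition ball (X : {set 'I_n}) :=
  [set T : {set 'I_n} | (#|T| == d) && (d <= #|T :&: X| + 2)%N].

Definition beta := (1 + d * (n - d) + 'C(d, 2) * 'C(n - d, 2))%N.

Lemma ball_card (X : {set 'I_n}) : #|X| = d -> (#|ball X| <= beta)%N.
Proof.
move=> cX.
pose dr (Y : {set 'I_n}) t := [set A : {set 'I_n} | A \subset Y & #|A| == t].
pose D t := setX (dr X t) (dr (~: X) t).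
pose f (T : {set 'I_n}) := (X :\: T, T :\: X).
pose g (p : {set 'I_n} * {set 'I_n}) := (X :\: p.1) :|: p.2.
have fK : cancel f g.
  move=> T; apply/setP => l; rewrite !inE.
  by case: (l \in X); case: (l \in T).
have cD t : #|D t| = ('C(d, t) * 'C(n - d, t))%N.
  rewrite cardsX !cards_draws cX; congr (_ * 'C(_, _))%N.
  have h1 := cardsC X; have h2 := card_ord n; rewrite cX in h1; rewrite h2 in h1; lia.
rewrite -(card_imset _ (can_inj fK)).
apply: (@leq_trans #|D 0 :|: D 1 :|: D 2|).
  apply: subset_leq_card; apply/subsetP => p /imsetP [T]; rewrite inE => /andP [/eqP cT hT] ->.
  have e1 : #|X :\: T| = (d - #|T :&: X|)%N by rewrite cardsD setIC cX.
  have e2 : #|T :\: X| = (d - #|T :&: X|)%N by rewrite cardsD cT.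
  have hs : ((d - #|T :&: X|) < 3)%N by lia.
  have mem : (X :\: T, T :\: X) \in D (d - #|T :&: X|)%N.
    rewrite !inE e1 e2 eqxx !andbT; apply/andP; split; apply/subsetP => l; rewrite !inE.
      by case/andP.
    by case/andP => ->.
  move: mem; set t := (d - _)%N in hs *; rewrite !inE.
  by case: t hs => [|[|[|]]] // _ ->; rewrite ?orbT.
apply: leq_trans (leq_card_setU _ _) _.
rewrite /beta -cD; apply: leq_add => //.
apply: leq_trans (leq_card_setU _ _) _.
by rewrite !cD !bin0 !bin1.
Qed.

Lemma card_bigcup_le t (B : 'I_t -> {set {set 'I_n}}) :
  (#|\bigcup_(j < t) B j| <= \sum_(j < t) #|B j|)%N.
Proof.
elim/big_rec2: _ => [|j s U _ ih]; first by rewrite cards0.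
by apply: leq_trans (leq_card_setU _ _) _; rewrite leq_add2l.
Qed.

Lemma greedy r : (beta * r <= 'C(n, d))%N ->
  exists S : nat -> {set 'I_n},
    (forall j, j < r -> #|S j| = d)%N /\
    (forall j j', j < r -> j' < r -> j != j' -> #|S j :&: S j'| + 2 < d)%N.
Proof.
move=> hr.
suff: forall t, (t <= r)%N -> exists S : nat -> {set 'I_n},
    (forall j, j < t -> #|S j| = d)%N /\
    (forall j j', j < t -> j' < t -> j != j' -> #|S j :&: S j'| + 2 < d)%N.
  by apply.
elim => [|t ih] tr.
  by exists (fun=> set0); split.
have [S [S1 S2]] := ih (ltnW tr).
pose Bad := \bigcup_(j < t) ball (S j).
pose Dr := [set T : {set 'I_n} | #|T| == d].
have cBad : (#|Bad| < #|Dr|)%N.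
  rewrite card_draws card_ord.
  apply: leq_ltn_trans (card_bigcup_le _) _.
  apply: (@leq_ltn_trans (\sum_(j < t) beta)).
    by apply: leq_sum => j _; apply: ball_card; apply: S1.
  rewrite sum_nat_const card_ord.
  have b1 : (0 < beta)%N by rewrite /beta -addnA add1n.
  apply: leq_trans hr; rewrite [X in _ < X]mulnC ltn_pmul2r //.
have [T TD TB] : exists2 T, T \in Dr & T \notin Bad.
  apply/exists_inP; apply: contraLR cBad => /exists_inPn h.
  rewrite -leqNgt; apply: subset_leq_card; apply/subsetP => T TD.
  by have := h T TD; rewrite negbK.
have cT : #|T| = d by move: TD; rewrite inE => /eqP.
have far j : (j < t)%N -> (#|T :&: S j| + 2 < d)%N.
  move=> jt; move: TB; apply: contraR; rewrite -leqNgt => h.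
  apply/bigcupP; exists (Ordinal jt) => //.
  by rewrite inE cT eqxx /= -ltnS.
exists (fun j => if j == t then T else S j); split.
  move=> j; rewrite ltnS leq_eqVlt; case: eqP => [-> //|_] /= jt.
  by apply: S1.
move=> j j'; rewrite !ltnS [(j <= t)%N]leq_eqVlt [(j' <= t)%N]leq_eqVlt.
case: (j =P t) => [->|/eqP jt]; case: (j' =P t) => [->|/eqP j't] /=; rewrite ?eqxx ?(negbTE jt) ?(negbTE j't).
- by [].
- by move=> _ h _; apply: far.
- by move=> h _ _; rewrite setIC; apply: far.
- by move=> h h' hj; apply: S2.
Qed.

End Greedy.

End Comb.
Import Comb.

(* Counting argument: more than N polynomials in N variables are dependent. *)
Module Cnt.
Import GRing.Theory.
Local Open Scope ring_scope.

Section Count.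
Variable K : fieldType.

Lemma msize_exp_le N (p : {mpoly K[N]}) e : (msize (p ^+ e) <= e * (msize p).+1 + 1)%N.
Proof.
elim: e => [|e ih]; first by rewrite expr0 msize1.
rewrite exprS; apply: leq_trans (msizeM_le _ _) _.
move: ih; set a := msize _; set b := msize _; lia.
Qed.

Lemma msize_prod_le N k (f : 'I_k -> {mpoly K[N]}) :
  (msize (\prod_(i < k) f i) <= \sum_(i < k) (msize (f i)).+1 + 1)%N.
Proof.
elim/big_rec2: _ => [|i s p _ ih]; first by rewrite msize1.
apply: leq_trans (msizeM_le _ _) _.
move: ih; set a := msize _; set b := msize _; lia.
Qed.

End Count.

Lemma expn_mono a b e : (a <= b -> a ^ e <= b ^ e)%N.
Proof. by move=> ab; elim: e => // e ih; rewrite !expnS leq_mul. Qed.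

Section Count2.
Variable K : fieldType.

Lemma dep_count N k (g : k.-tuple {mpoly K[N]}) : (N < k)%N ->
  exists2 P : {mpoly K[k]}, P != 0 & P \mPo g = 0.
Proof.
move=> Nk.
pose m := (\max_(i < k) msize (tnth g i))%N.
pose c := (k * m.+1 + 2 * k + 1)%N.
pose q := (c ^ N)%N.
pose E := (k * (q * m.+1 + 2))%N.
pose A := {ffun 'I_k -> 'I_q.+1}.
pose B := {ffun 'I_N -> 'I_E.+1}.
pose monoA (a : A) : 'X_{1..k} := [multinom (a i : nat) | i < k].
pose monoB (b : B) : 'X_{1..N} := [multinom (b i : nat) | i < N].
pose G (a : A) := \prod_(i < k) (tnth g i) ^+ (a i).
have szG a : (msize (G a) <= E.+1)%N.
  apply: leq_trans (msize_prod_le _) _.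
  have -> : E = (\sum_(i < k) (q * m.+1 + 2))%N by rewrite sum_nat_const card_ord.
  rewrite addn1 ltnS leq_sum // => i _.
  have h1 := msize_exp_le (tnth g i) (a i).
  have h2 : (msize (tnth g i) <= m)%N by apply: (leq_bigmax_cond (F := fun i => msize (tnth g i)) i (P := xpredT)). 
  have h3 : (a i <= q)%N by rewrite -ltnS ltn_ord.
  have h4 : (a i * (msize (tnth g i)).+1 <= q * m.+1)%N by apply: leq_mul; rewrite // ltnS.
  move: h1 h4; set x := msize _; set y := (a i * _)%N; lia.
have cardAB : (#|B| < #|A|)%N.
  rewrite !card_ffun !card_ord.
  have h1 : (E.+1 <= c * q.+1)%N.
    rewrite /E /c; set u := m.+1; nia.
  apply: (@leq_trans ((c * q.+1) ^ N).+1); first by rewrite ltnS expn_mono.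
  rewrite expnMn -/q.
  apply: (@leq_trans (q.+1 ^ N.+1)); last by apply: leq_pexp2l.
  by rewrite expnS ltn_pmul2r ?expn_gt0.
pose M := \matrix_(i < #|A|, j < #|B|) (G (enum_val i))@_(monoB (enum_val j)).
have kerNZ : kermx M != 0.
  rewrite kermx_eq0 /row_free; apply/negP => /eqP hr.
  by move: (rank_leq_col M); rewrite hr leqNgt cardAB.
have [i0 Hi0] : exists i0, row i0 (kermx M) != 0.
  apply/existsP; move: kerNZ; apply: contraR => /existsPn H.
  apply/eqP/row_matrixP => i; rewrite row0; exact/eqP/negbNE/H.
set v := row i0 (kermx M) in Hi0.
have vM : v *m M = 0 by rewrite -row_mul mulmx_ker row0.
have [j0 Hj0] : exists j0, v 0 j0 != 0.
  apply/existsP; move: Hi0; apply: contraR => /existsPn H.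
  apply/eqP/matrixP => i j; rewrite mxE (ord1 i) [RHS]mxE; have := H j; by rewrite negbK /v mxE => /eqP.
pose P : {mpoly K[k]} := \sum_(a : A) v 0 (enum_rank a) *: 'X_[monoA a].
have monoA_inj : injective monoA.
  move=> a a2 /mnmP h; apply/ffunP => i1; apply/val_inj.
  by move: (h i1); rewrite !mnmE.
exists P.
  apply/negP => /eqP P0.
  have := congr1 (mcoeff (monoA (enum_val j0))) P0.
  rewrite mcoeff0 raddf_sum /= (bigD1 (enum_val j0)) //= big1.
    by rewrite mcoeffZ mcoeffX eqxx mulr1 addr0 enum_valK => /eqP; rewrite (negbTE Hj0).
  move=> a Ha; rewrite mcoeffZ mcoeffX.
  by rewrite (inj_eq monoA_inj) (negbTE Ha) mulr0.
rewrite /P raddf_sum /=.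
apply/mpolyP => mu; rewrite mcoeff0 raddf_sum /=.
have -> : \sum_(a : A) mcoeff mu (v 0 (enum_rank a) *: 'X_[monoA a] \mPo g)
   = \sum_(a : A) v 0 (enum_rank a) * (G a)@_mu.
  apply: eq_bigr => a _; rewrite comp_mpolyZ comp_mpolyX mcoeffZ; congr (_ * mcoeff _ _).
  by apply: eq_bigr => i _; rewrite mnmE.
have [small|big] := boolP [forall i, (mu i <= E)%N].
  pose b : B := [ffun i => inord (mu i)].
  have mub : mu = monoB b.
    apply/mnmP => i; rewrite mnmE ffunE inordK // ltnS.
    exact: (forallP small i).
  have := congr1 (fun X : 'rV[K]_#|B| => X 0 (enum_rank b)) vM.
  rewrite /= [(v *m M) _ _]mxE [(0 : 'rV[K]__) _ _]mxE => h.
  rewrite -[RHS]h (reindex (@enum_val A (pred_of_argType A))) /=; last first.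
    by exists (@enum_rank A) => x _; [apply: enum_valK | apply: enum_rankK].
  rewrite [in RHS](eq_bigr (fun i => v 0 i * (G (enum_val i))@_mu)).
    rewrite [LHS](eq_bigr (fun i => v 0 i * (G (enum_val i))@_mu)) //.
    by move=> i _; rewrite enum_valK.
  by move=> i _; rewrite !mxE enum_rankK mub.
rewrite big1 // => a _.
move/forallPn: big => [i]; rewrite -ltnNge => hi.
rewrite memN_msupp_eq0 ?mulr0 //; apply: msize_mdeg_ge.
apply: leq_trans (szG a) _; apply: leq_trans hi _.
by rewrite mdegE (bigD1 i) //= leq_addr.
Qed.

End Count2.

End Cnt.
Import Cnt.

Module Lead.
Import GRing.Theory order.Order.TTheory.
Local Open Scope ring_scope.

Lemma comp_mpolyA (R : comRingType) n k l (P : {mpoly R[n]})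
  (g : n.-tuple {mpoly R[k]}) (h : k.-tuple {mpoly R[l]}) :
  (P \mPo g) \mPo h = P \mPo [tuple (tnth g i) \mPo h | i < n].
Proof.
rewrite [P \mPo g]comp_mpolyE [RHS]comp_mpolyE raddf_sum /=; apply: eq_bigr => m _.
rewrite comp_mpolyZ rmorph_prod; congr (_ *: _); apply: eq_bigr => i _.
by rewrite rmorphXn /= tnth_mktuple.
Qed.

Lemma exists_max (T : eqType) N (L : T -> 'X_{1..N}) (s : seq T) : s != [::] ->
  exists2 x, x \in s & forall y, y \in s -> (L y <= L x)%O.
Proof.
elim: s => [//|a s ih] _.
have [->|sn] := eqVneq s [::].
  by exists a; rewrite ?mem_seq1 // => y; rewrite mem_seq1 => /eqP ->.
have [x xs xm] := ih sn.
have [ax|xa] := boolP (L a <= L x)%O.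
  exists x; first by rewrite inE xs orbT.
  by move=> y; rewrite inE => /orP [/eqP ->|/xm].
exists a; first by rewrite inE eqxx.
have xa' : (L x <= L a)%O by case: (order.Order.TotalTheory.leP (L a) (L x)) xa => // h _; apply: order.Order.POrderTheory.ltW.
move=> y; rewrite inE => /orP [/eqP -> //|/xm h].
exact: order.Order.POrderTheory.le_trans h xa'.
Qed.

Lemma lem_sum N k (f g : 'I_k -> 'X_{1..N}) : (forall i, f i <= g i)%O ->
  ((\sum_(i < k) f i)%MM <= (\sum_(i < k) g i)%MM)%O.
Proof.
move=> h; elim/big_rec2: _ => [|i x y _ ih]; first exact: order.Order.POrderTheory.lexx.
exact: lem_add.
Qed.

Lemma lead_indep (K : idomainType) N k (G : k.-tuple {mpoly K[N]}) :
  (forall i, mleadc (tnth G i) != 0) ->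
  injective (fun m : 'X_{1..k} => (\sum_(i < k) mlead (tnth G i) *+ m i)%MM) ->
  forall P : {mpoly K[k]}, P \mPo G = 0 -> P = 0.
Proof.
move=> lc inj P PG; apply/eqP; apply: contraT => nzP.
set L := (fun m : 'X_{1..k} => _) in inj.
have sP : msupp P != [::] by rewrite msupp_eq0.
have [ms msP msmax] := exists_max L sP.
have := congr1 (mcoeff (L ms)) PG.
rewrite mcoeff0 comp_mpolyE raddf_sum (bigD1_seq ms) ?msupp_uniq //= [X in _ + X = _]big1_seq; last first.
  move=> m /andP [mms mP]; rewrite mcoeffZ [X in _ * X]mcoeff_gt_mlead ?mulr0 //.
  apply: le_lt_trans; first exact: mlead_prod_le.
  apply: (@le_lt_trans _ _ (L m)).
    by apply: lem_sum => i; apply: mleadX_le.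
  rewrite lt_neqAle msmax // andbT; apply: contra mms => /eqP h.
  by apply/eqP; apply: inj.
have eL : L ms = (\sum_(i < k) mlead (tnth G i ^+ ms i))%MM.
  apply: eq_bigr => i _; rewrite mleadX_proper //; exact: mulfI.
rewrite addr0 mcoeffZ eL mleadc_prod => /eqP.
have h1 : P@_ms != 0 by rewrite -mcoeff_msupp.
have h2 : \prod_(p < k) mleadc (tnth G p ^+ ms p) != 0.
  rewrite prodf_seq_neq0; apply/allP => i _ /=.
  rewrite mleadX_proper; last exact: mulfI.
  by rewrite mleadcX expf_neq0.
by rewrite mulf_eq0 (negbTE h1) (negbTE h2).
Qed.

End Lead.
Import Lead.

Module Spc.
Import GRing.Theory order.Order.TTheory.
Local Open Scope ring_scope.

Section Spec.
Variables (n d r : nat) (S : nat -> {set 'I_n}).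
Hypotheses (d0 : (0 < d)%N) (dn : (d < n)%N)
  (S1 : forall j, (j < r)%N -> #|S j| = d)
  (S2 : forall j j', (j < r)%N -> (j' < r)%N -> j != j' -> (#|S j :&: S j'| + 2 < d)%N).

Definition o0 : 'I_n := Ordinal (ltn_trans d0 dn).
Definition a0 (j : 'I_r) : 'I_n := odflt o0 [pick x in S j].
Definition b0 (j : 'I_r) : 'I_n := odflt o0 [pick x in ~: S j].

Lemma cS (j : 'I_r) : #|S j| = d.
Proof. exact: S1. Qed.

Lemma a0P j : a0 j \in S j.
Proof.
rewrite /a0; case: pickP => [x -> //|h].
have := cS j; rewrite eq_card0 // => d00; by move: d0; rewrite -d00.
Qed.

Lemma b0P j : b0 j \notin S j.
Proof.
rewrite /b0; case: pickP => [x|h]; first by rewrite inE.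
have := cardsC (S j); rewrite [#|~: S j|]eq_card0 // cS card_ord addn0 => e.
by move: dn; rewrite e ltnn.
Qed.

Definition R (j : 'I_r) (k : 'I_n) := Rset (S j) (a0 j) (b0 j) k.

Lemma cR j k : #|R j k| == d.
Proof. by rewrite /R (Rset_card (a0P j) (b0P j) (cS j)). Qed.

Definition Rd j k : dsubset n d := exist _ (R j k) (cR j k).

Definition dec (i : 'I_(r * n)) : 'I_r * 'I_n :=
  enum_val (cast_ord (esym (mxvec_cast r n)) i).

Lemma decK j k : dec (mxvec_index j k) = (j, k).
Proof. by rewrite /dec /mxvec_index cast_ordK enum_rankK. Qed.

Lemma idx_eq (j j' : 'I_r) (k k' : 'I_n) :
  (mxvec_index j k == mxvec_index j' k') = (j == j') && (k == k').
Proof.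
apply/eqP/andP => [h|[/eqP -> /eqP -> //]].
by have := congr1 dec h; rewrite !decK => -[-> ->].
Qed.

Definition gt := [tuple @secant_param n d r (Rd (dec i).1 (dec i).2) | i < r * n].

Definition Z : 'I_(r * n).+1 := ord_max.
Definition w (v : 'I_(r * n)) : 'I_(r * n).+1 := widen_ord (leqnSn _) v.

Definition phi : (r * n).-tuple {mpoly CC[(r * n).+1]} :=
  [tuple ('X_(w v) * 'X_Z ^+ ((dec v).2 \in S (dec v).1)) | v < r * n].

Definition expo (j : 'I_r) (T : {set 'I_n}) : 'X_{1..(r * n).+1} :=
  (\sum_(l in T) (U_(w (mxvec_index j l)) + U_(Z) *+ (l \in S j)))%MM.

Lemma comp_sp (T : dsubset n d) :
  @secant_param n d r T \mPo phi = \sum_(j < r) 'X_[expo j (val T)].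
Proof.
rewrite /secant_param raddf_sum; apply: eq_bigr => j _ /=.
rewrite rmorph_prod /expo -mprodXE; apply: eq_bigr => l _.
by rewrite /mu /= comp_mpolyXU -tnth_nth tnth_mktuple decK /= mpolyXD mpolyXn.
Qed.

Lemma sum_in (T A : {set 'I_n}) : (\sum_(l in T) (l \in A : nat))%N = #|T :&: A|.
Proof.
rewrite big_mkcond /= -sum1_card [RHS]big_mkcond /=; apply: eq_bigr => l _.
by rewrite inE; case: (l \in T); case: (l \in A).
Qed.

Lemma mdeg_expo j T : mdeg (expo j T) = (#|T| + #|T :&: S j|)%N.
Proof.
rewrite /expo mdeg_sum.
rewrite (eq_bigr (fun l => 1 + (l \in S j : nat)))%N; last first.
  by move=> l _; rewrite mdegD mdegMn !mdeg1 mul1n.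
by rewrite big_split /= sum1_card sum_in.
Qed.

Lemma expo_coord j' T j l :
  expo j' T (w (mxvec_index j l)) = ((j' == j) && (l \in T) : nat).
Proof.
rewrite /expo mnm_sumE.
rewrite (eq_bigr (fun l' => ((j' == j) && (l' == l) : nat))); last first.
  move=> l' _; rewrite mnmDE mulmnE !mnm1E.
  have -> : (Z == w (mxvec_index j l)) = false.
    apply/negbTE; rewrite -val_eqE /= neq_ltn; apply/orP; right; exact: (ltn_ord (mxvec_index j l)).
  have -> : (w (mxvec_index j' l') == w (mxvec_index j l)) =
            (mxvec_index j' l' == mxvec_index j l) by rewrite -!val_eqE.
  by rewrite idx_eq mul0n addn0.
case: (j' == j) => /=; last by rewrite big1.
case: (boolP (l \in T)) => lT.
  by rewrite (bigD1 l) //= eqxx big1 // => l' /andP [_ /negbTE ->].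
by rewrite big1 // => l' l'T; case: eqP => // e; rewrite -e l'T in lT.
Qed.


Lemma meet_lt (j j' : 'I_r) k : j' != j ->
  (#|R j k :&: S j'| < #|R j k :&: S j|)%N.
Proof.
move=> jj.
have m1 := Rset_meet (a0 j) (b0 j) (cS j) k; rewrite -/(R j k) in m1.
have far : (#|S j :&: S j'| + 2 < d)%N.
  apply: S2 => //; by rewrite val_eqE eq_sym.
have cRk : #|R j k| = d by apply/eqP/cR.
have hU : (#|(R j k :&: S j) :|: (R j k :&: S j')| <= d)%N.
  rewrite -cRk; apply: subset_leq_card; apply/subsetP => x; rewrite !inE.
  by case/orP => /andP [->].
have hI : (#|(R j k :&: S j) :&: (R j k :&: S j')| <= #|S j :&: S j'|)%N.
  apply: subset_leq_card; apply/subsetP => x; rewrite !inE.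
  by case/andP => /andP [_ ->] /andP [_ ->].
have := cardsUI (R j k :&: S j) (R j k :&: S j').
lia.
Qed.

Lemma expo_gt0 j T : (0 < mdeg (expo j T))%N -> (0%MM < expo j T)%O.
Proof. by move=> h; apply: lt_mdeg_ltmc; rewrite mdeg0. Qed.

Lemma lead_G j k :
  mlead (@secant_param n d r (Rd j k) \mPo phi) = expo j (R j k) /\
  mleadc (@secant_param n d r (Rd j k) \mPo phi) = 1.
Proof.
rewrite comp_sp /= (bigD1 j) //=.
set E := expo j (R j k).
set rest := \sum_(j' | j' != j) _.
have lt j' : j' != j -> (expo j' (R j k) < E)%O.
  move=> jj; apply: lt_mdeg_ltmc; rewrite !mdeg_expo ltn_add2l; exact: meet_lt.
have rl : (mlead rest < E)%O.
  rewrite /rest; apply: (big_ind (fun p => (mlead p < E)%O)).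
  - rewrite mlead0; apply: expo_gt0; rewrite mdeg_expo (eqP (cR j k)); lia.
  - move=> x y hx hy; apply: le_lt_trans (mleadD_le x y) _; by rewrite ltUx hx hy.
  - by move=> j' jj; rewrite mleadXm; apply: lt.
have e1 : mlead ('X_[E] + rest) = E by rewrite mleadDl mleadXm.
split => //; rewrite e1 mcoeffD mcoeffX eqxx mcoeff_gt_mlead //.
by rewrite addr0.
Qed.

Definition GG := [tuple (tnth gt i) \mPo phi | i < r * n].

Lemma coordL (m : 'X_{1..r * n}) j l :
  ((\sum_(i < r * n) mlead (tnth GG i) *+ m i)%MM) (w (mxvec_index j l)) =
  (\sum_k m (mxvec_index j k) * (l \in R j k))%N.
Proof.
rewrite mnm_sumE.
rewrite (eq_bigr (fun i => (((dec i).1 == j) && (l \in R (dec i).1 (dec i).2)) * m i)%N);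
  last first.
  by move=> i _; rewrite mulmnE !tnth_mktuple (proj1 (lead_G _ _)) expo_coord mulnC.
rewrite (reindex (fun p : 'I_r * 'I_n => mxvec_index p.1 p.2)) /=; last first.
  exists dec => [[j0 k0] _|i0 _] /=; first exact: decK.
  by case/mxvec_indexP: i0 => j0 k0; rewrite decK.
rewrite (eq_bigr (fun p : 'I_r * 'I_n => ((p.1 == j) && (l \in R p.1 p.2)) * m (mxvec_index p.1 p.2))%N);
  last by move=> p _; rewrite decK.
have -> : (\sum_(p : 'I_r * 'I_n) ((p.1 == j) && (l \in R p.1 p.2)) * m (mxvec_index p.1 p.2) =
     \sum_(j' < r) \sum_(k < n) ((j' == j) && (l \in R j' k)) * m (mxvec_index j' k))%N.
  by rewrite [RHS]pair_big.
rewrite (bigD1 j) //= [X in (_ + X)%N]big1 ?addn0.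
  by apply: eq_bigr => k _; rewrite eqxx mulnC.
by move=> j' jj; rewrite big1 // => k _; rewrite (negbTE jj).
Qed.

Lemma indep_gt : alg_indep gt.
Proof.
move=> P PG.
have := congr1 (comp_mpoly phi) PG; rewrite /= comp_mpolyA comp_mpoly0 -/GG.
apply: lead_indep.
  by move=> i; rewrite !tnth_mktuple (proj2 (lead_G _ _)) oner_neq0.
move=> m1 m2 h; apply/mnmP => i; case/mxvec_indexP: i => j k.
have := @block_inj n d (S j) (a0 j) (b0 j) (a0P j) (b0P j) (cS j)
  (fun k => m1 (mxvec_index j k)) (fun k => m2 (mxvec_index j k)) d0.
apply => // l.
by have := congr1 (fun mm : 'X_{1..(r * n).+1} => mm (w (mxvec_index j l))) h; rewrite /= !coordL.
Qed.

Lemma exists_indep : exists g : (r * n).-tuple {mpoly CC[r * n]},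
  (forall i : 'I_(r * n), exists c : dsubset n d, tnth g i = @secant_param n d r c) /\ alg_indep g.
Proof.
exists gt; split; last exact: indep_gt.
by move=> i; rewrite tnth_mktuple; eexists.
Qed.

End Spec.

End Spc.
Import Spc.

Import GRing.Theory.

Theorem theorem5p8 (n d r : nat) :
  (1 <= d)%N -> (d < n)%N -> (1 <= r)%N ->
  ((1 + d * (n - d) + 'C(d, 2) * 'C(n - d, 2)) * r <= 'C(n, d))%N ->
  secant_hypersimplex_dim n d r (minn (n * r) 'C(n, d)).-1 /\
  (minn (n * r) 'C(n, d)).-1 = (n * r).-1.
Proof.
move=> d1 dn r1 H.
have nle : (n <= 1 + d * (n - d))%N.
  have [s ->] : exists s, n = (d + s.+1)%N by exists (n - d).-1; lia.
  rewrite addnC addnK; case: d d1 {dn H} => [//|d'] _; nia.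
have nrC : (n * r <= 'C(n, d))%N.
  apply: leq_trans H; rewrite leq_mul2r; apply/orP; right.
  by apply: leq_trans nle _; rewrite leq_addr.
have e : (minn (n * r) 'C(n, d)).-1 = (n * r).-1 by rewrite (minn_idPl nrC).
split => //.
rewrite e /secant_hypersimplex_dim prednK; last by rewrite muln_gt0; apply/andP; split; lia.
have [S [S1 S2]] := @greedy n d r H.
split.
  have [g [hg ind]] := exists_indep d1 dn S1 S2.
  by rewrite [(n * r)%N]mulnC; exists g; split; [exact: hg | exact: ind].
move=> k g _ ind.
rewrite [(n * r)%N]mulnC leqNgt; apply/negP => lt.
have [P nz PG] := dep_count g lt.
by rewrite (ind P PG) eqxx in nz.
Qed.
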